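(* Let $n\ge 2$ and let $\mu_1,\mu_2\in\Lambda$ satisfy $\alpha^\vee_i(\mu_1)=\alpha^\vee_i(\mu_2)$ for all $1\le i\le n-1$. Then the assignment $$E^{(r)}_i\mapsto E^{(r)}_i,\quad F^{(r)}_i\mapsto F^{(r)}_i,\quad D^{(s)}_i\mapsto D^{(s-\epsilon^\vee_i(\mu_1-\mu_2))}_i,\quad \widetilde D^{(s)}_i\mapsto \widetilde D^{(s+\epsilon^\vee_i(\mu_1-\mu_2))}_i$$ (for all admissible $i,r,s$) gives rise to a $\mathbb{C}$-algebra isomorphism $Y_{\mu_1}(\mathfrak{gl}_n)\xrightarrow{\sim} Y_{\mu_2}(\mathfrak{gl}_n)$.
   Context: Let $\Lambda=\bigoplus_{j=1}^n\mathbb{Z}\epsilon_j$ and let $\epsilon^\vee_1,\dots,\epsilon^\vee_n$ be the dual basis of the dual lattice ($\epsilon^\vee_i(\epsilon_j)=\delta_{ij}$); set $\alpha^\vee_i=\epsilon^\vee_i-\epsilon^\vee_{i+1}$ for $1\le i\le n-1$. For $\nu\in\Lambda$ put $d_j:=\epsilon^\vee_j(\nu)$. The shifted Drinfeld Yangian $Y_\nu(\mathfrak{gl}_n)$ is the associative $\mathbb{C}$-algebra generated by $E_i^{(r)},F_i^{(r)}$ ($1\le i<n$, $r\ge1$), $D_i^{(s)}$ ($1\le i\le n$, $s\ge d_i$), $\widetilde D_i^{(s)}$ ($1\le i\le n$, $s\ge -d_i$), with defining relations (all admissible indices): (Y0) $D_i^{(d_i)}=1$, $\sum_{t=d_i}^{r+d_i}D_i^{(t)}\widetilde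 D_i^{(r-t)}=-\delta_{r,0}$, $[D_i^{(r)},D_j^{(s)}]=0$; (Y1) $[E_i^{(r)},F_j^{(s)}]=-\delta_{i,j}\sum_{t=-d_i}^{r+s-1-d_{i+1}}\widetilde D_i^{(t)}D_{i+1}^{(r+s-t-1)}$; (Y2) $[D_i^{(r)},E_j^{(s)}]=(\delta_{i,j+1}-\delta_{i,j})\sum_{t=d_i}^{r-1}D_i^{(t)}E_j^{(r+s-t-1)}$; (Y3) $[D_i^{(r)},F_j^{(s)}]=(\delta_{i,j}-\delta_{i,j+1})\sum_{t=d_i}^{r-1}F_j^{(r+s-t-1)}D_i^{(t)}$; (Y4) $[E_i^{(r)},E_i^{(s)}]=\sum_{t=1}^{r-1}E_i^{(t)}E_i^{(r+s-t-1)}-\sum_{t=1}^{s-1}E_i^{(t)}E_i^{(r+s-t-1)}$; (Y5) $[F_i^{(r)},F_i^{(s)}]=\sum_{t=1}^{s-1}F_i^{(r+s-t-1)}F_i^{(t)}-\sum_{t=1}^{r-1}F_i^{(r+s-t-1)}F_i^{(t)}$; (Y6) $[E_i^{(r+1)},E_{i+1}^{(s)}]-[E_i^{(r)},E_{i+1}^{(s+1)}]=-E_i^{(r)}E_{i+1}^{(s)}$; (Y7) $[F_i^{(r+1)},F_{i+1}^{(s)}]-[F_i^{(r)},F_{i+1}^{(s+1)}]=F_{i+1}^{(s)}F_i^{(r)}$; (Y8),(Y9) $[E_i^{(r)},E_j^{(s)}]=0=[F_i^{(r)},F_j^{(s)}]$ if $|i-j|>1$; (Y10),(Y11) for $|i-j|=1$: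 $[E_i^{(r)},[E_i^{(s)},E_j^{(t)}]]+[E_i^{(s)},[E_i^{(r)},E_j^{(t)}]]=0$ and the same with all $E$ replaced by $F$. *)

(* Defs.v *)
From HB Require Import structures.
From mathcomp Require Import all_boot all_order all_algebra.
From mathcomp Require Import reals.
From mathcomp Require Import complex.
Set Implicit Arguments. Unset Strict Implicit. Unset Printing Implicit Defensive.
Import Order.TTheory GRing.Theory Num.Theory.
Local Open Scope ring_scope.

Notation Cplx R := (complex (R : realType)).

(* Weights: Lambda = Z^n, nu = sum_j nu_j eps_j, indexed 0..n-1 internally.
   eps_coord nu j = epsilon^vee_j(nu) for the 1-based index 1 <= j <= n
   (and 0 outside that range, never used). *)
Definition Lambda (n : nat) := {ffun 'I_n -> int}.

Definition eps_coord (n : nat) (nu : Lambda n) (j : nat) : int :=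
  odflt 0 (omap nu (insub j.-1 : option 'I_n)).

Definition alpha_coroot (n : nat) (nu : Lambda n) (i : nat) : int :=
  eps_coord nu i - eps_coord nu i.+1.

Definition isum (V : nmodType) (a b : int) (F : int -> V) : V :=
  if (a <= b)%R then \sum_(k < (absz (b - a)).+1) F (a + k%:Z) else 0.

Definition comm (A : pzRingType) (x y : A) : A := x * y - y * x.

Definition kd (A : pzRingType) (i j : nat) : A := (i == j)%:R.

Section Rels.
Variable (R : realType) (n : nat) (d : nat -> int) (A : algType (Cplx R)).
Variables (E F : nat -> int -> A) (D Dt : nat -> int -> A).
(* E i r = E_i^{(r)} (1 <= i < n, r >= 1); F likewise;
   D i s = D_i^{(s)} (1 <= i <= n, s >= d i);
   Dt i s = \widetilde D_i^{(s)} (1 <= i <= n, s >= - d i). *)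

Definition Eidx (i : nat) := (1 <= i < n)%N.
Definition Didx (i : nat) := (1 <= i <= n)%N.

Definition yangian_rels : Prop :=
  (forall i, Didx i -> D i (d i) = 1) /\
  (forall i, Didx i -> forall r : nat,
      isum (d i) (r%:Z + d i) (fun t => D i t * Dt i (r%:Z - t))
      = - (kd A r 0)) /\
  (forall i j (r s : int), Didx i -> Didx j -> d i <= r -> d j <= s ->
      comm (D i r) (D j s) = 0) /\
  (forall i j (r s : int), Eidx i -> Eidx j -> 1 <= r -> 1 <= s ->
      comm (E i r) (F j s) =
      - (kd A i j * isum (- d i) (r + s - 1 - d i.+1)
                          (fun t => Dt i t * D i.+1 (r + s - t - 1)))) /\
  (forall i j (r s : int), Didx i -> Eidx j -> d i <= r -> 1 <= s ->
      comm (D i r) (E j s) =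
      (kd A i j.+1 - kd A i j) *
        isum (d i) (r - 1) (fun t => D i t * E j (r + s - t - 1))) /\
  (forall i j (r s : int), Didx i -> Eidx j -> d i <= r -> 1 <= s ->
      comm (D i r) (F j s) =
      (kd A i j - kd A i j.+1) *
        isum (d i) (r - 1) (fun t => F j (r + s - t - 1) * D i t)) /\
  (forall i (r s : int), Eidx i -> 1 <= r -> 1 <= s ->
      comm (E i r) (E i s) =
      isum 1 (r - 1) (fun t => E i t * E i (r + s - t - 1))
      - isum 1 (s - 1) (fun t => E i t * E i (r + s - t - 1))) /\
  (forall i (r s : int), Eidx i -> 1 <= r -> 1 <= s ->
      comm (F i r) (F i s) =
      isum 1 (s - 1) (fun t => F i (r + s - t - 1) * F i t)
      - isum 1 (r - 1) (fun t => F i (r + s - t - 1) * F i t)) /\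
  (forall i (r s : int), Eidx i -> Eidx i.+1 -> 1 <= r -> 1 <= s ->
      comm (E i (r + 1)) (E i.+1 s) - comm (E i r) (E i.+1 (s + 1)) =
      - (E i r * E i.+1 s)) /\
  (forall i (r s : int), Eidx i -> Eidx i.+1 -> 1 <= r -> 1 <= s ->
      comm (F i (r + 1)) (F i.+1 s) - comm (F i r) (F i.+1 (s + 1)) =
      F i.+1 s * F i r) /\
  (forall i j (r s : int), Eidx i -> Eidx j -> (1 < absz (i%:Z - j%:Z))%N ->
      1 <= r -> 1 <= s ->
      comm (E i r) (E j s) = 0 /\ comm (F i r) (F j s) = 0) /\
  (forall i j (r s t : int), Eidx i -> Eidx j -> absz (i%:Z - j%:Z) = 1%N ->
      1 <= r -> 1 <= s -> 1 <= t ->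
      comm (E i r) (comm (E i s) (E j t)) + comm (E i s) (comm (E i r) (E j t)) = 0 /\
      comm (F i r) (comm (F i s) (F j t)) + comm (F i s) (comm (F i r) (F j t)) = 0).
End Rels.

Definition alg_hom (K : pzRingType) (A B : algType K) (f : A -> B) : Prop :=
  (forall (a : K) (x y : A), f (a *: x + y) = a *: f x + f y) /\
  f 1 = 1 /\ (forall x y : A, f (x * y) = f x * f y).

(* (A, E, F, D, Dt) is a presentation of the shifted Yangian Y_nu(gl_n):
   the generators satisfy the relations, and A is universal among C-algebras
   with such elements (i.e. A is the algebra with these generators and
   defining relations). *)
Definition is_shifted_yangian (R : realType) (n : nat) (nu : Lambda n)
    (A : algType (Cplx R)) (E F D Dt : nat -> int -> A) : Prop :=
  let d := eps_coord nu in
  yangian_rels n d E F D Dt /\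
  forall (B : algType (Cplx R)) (E' F' D' Dt' : nat -> int -> B),
    yangian_rels n d E' F' D' Dt' ->
    (exists f : A -> B, alg_hom f /\
       (forall i r, Eidx n i -> 1 <= r -> f (E i r) = E' i r /\ f (F i r) = F' i r) /\
       (forall i s, Didx n i -> d i <= s -> f (D i s) = D' i s) /\
       (forall i s, Didx n i -> - d i <= s -> f (Dt i s) = Dt' i s)) /\
    (forall f g : A -> B, alg_hom f -> alg_hom g ->
       (forall i r, Eidx n i -> 1 <= r -> f (E i r) = g (E i r) /\ f (F i r) = g (F i r)) ->
       (forall i s, Didx n i -> d i <= s -> f (D i s) = g (D i s)) ->
       (forall i s, Didx n i -> - d i <= s -> f (Dt i s) = g (Dt i s)) ->
       forall x, f x = g x).

(* Main.v *)
Require Import Defs.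
From HB Require Import structures.
From mathcomp Require Import all_boot all_order all_algebra.
From mathcomp Require Import reals complex.
From mathcomp Require Import zify ring.
Import Order.TTheory GRing.Theory Num.Theory.
Local Open Scope ring_scope.

Lemma isum_shiftE (V : nmodType) (a b a' b' c : int) (F G : int -> V) :
  a' = a + c -> b' = b + c -> (forall t, G t = F (t - c)) ->
  isum a' b' G = isum a b F.
Proof.
move=> -> -> HG; rewrite /isum lerD2r.
have -> : b + c - (a + c) = b - a by ring.
case: ifP => // _; apply: eq_bigr => k _.
by rewrite HG; congr F; ring.
Qed.

Lemma const_c (n : nat) (mu1 mu2 : Lambda n) :
  (forall i : nat, (1 <= i <= n.-1)%N -> alpha_coroot mu1 i = alpha_coroot mu2 i) ->
  forall i, Didx n i ->
   eps_coord mu1 i - eps_coord mu2 i = eps_coord mu1 1 - eps_coord mu2 1.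
Proof.
move=> hyp [|k] /andP[]// _; elim: k => [//|k IH] Hk.
have := hyp k.+1; rewrite /alpha_coroot => h.
have Hk' : (k.+1 <= n.-1)%N by move: Hk; case: (n) => //.
have {}h := h ltac:(by rewrite Hk').
have := IH (ltnW Hk). lia.
Qed.

Lemma shift_rels (R : realType) (n : nat) (mu1 mu2 : Lambda n) :
  (forall i : nat, (1 <= i <= n.-1)%N -> alpha_coroot mu1 i = alpha_coroot mu2 i) ->
  forall (A : algType (Cplx R)) (E F D Dt : nat -> int -> A),
  yangian_rels n (eps_coord mu2) E F D Dt ->
  yangian_rels n (eps_coord mu1) E F
    (fun i s => D i (s - (eps_coord mu1 i - eps_coord mu2 i)))
    (fun i s => Dt i (s + (eps_coord mu1 i - eps_coord mu2 i))).
Proof.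
move=> hyp A E F D Dt.
have Hc := @const_c n mu1 mu2 hyp.
move=> [H0a [H0b [H0c [H1 [H2 [H3 [H4 [H5 [H6 [H7 [H89 H1011]]]]]]]]]]].
split; [|split; [|split; [|split; [|split; [|split]]]]] => //.
- move=> i Hi /=; rewrite -(H0a i Hi); congr (D i _); ring.
- move=> i Hi r /=; rewrite -(H0b i Hi r).
  symmetry; apply: (@isum_shiftE _ _ _ _ _ (- (eps_coord mu1 i - eps_coord mu2 i))); try ring.
  by move=> t; congr (_ * _); [congr (D i _)|congr (Dt i _)]; ring.
- move=> i j r s Hi Hj Hr Hs /=; apply: H0c => //; lia.
- move=> i j r s Hi Hj Hr Hs /=; rewrite H1 //; congr (- (_ * _)).
  have Hi1 : Didx n i by move: Hi; rewrite /Eidx /Didx; lia.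
  have Hi2 : Didx n i.+1 by move: Hi; rewrite /Eidx /Didx; lia.
  have := Hc _ Hi1; have := Hc _ Hi2 => h2 h1.
  symmetry; apply: (@isum_shiftE _ _ _ _ _ (- (eps_coord mu1 i - eps_coord mu2 i))); try lia.
  by move=> t; congr (Dt i _ * D i.+1 _); lia.
- move=> i j r s Hi Hj Hr Hs /=; rewrite H2 //; last lia; congr (_ * _).
  apply: (@isum_shiftE _ _ _ _ _ (- (eps_coord mu1 i - eps_coord mu2 i))); try ring.
  by move=> t; congr (D i _ * E j _); ring.
- move=> i j r s Hi Hj Hr Hs /=; rewrite H3 //; last lia; congr (_ * _).
  apply: (@isum_shiftE _ _ _ _ _ (- (eps_coord mu1 i - eps_coord mu2 i))); try ring.
  by move=> t; congr (F j _ * D i _); ring.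
Qed.

Lemma alg_hom_comp (K : pzRingType) (A B C : algType K) (f : A -> B) (g : B -> C) :
  alg_hom f -> alg_hom g -> alg_hom (g \o f).
Proof.
move=> [f1 [f2 f3]] [g1 [g2 g3]]; split; [|split] => /=.
- by move=> a x y; rewrite f1 g1.
- by rewrite f2 g2.
- by move=> x y; rewrite f3 g3.
Qed.

Lemma alg_hom_id (K : pzRingType) (A : algType K) : alg_hom (@id A).
Proof. by split. Qed.

Theorem lemma2p2 (R : realType) (n : nat) (mu1 mu2 : Lambda n) :
  (2 <= n)%N ->
  (forall i : nat, (1 <= i <= n.-1)%N -> alpha_coroot mu1 i = alpha_coroot mu2 i) ->
  forall (A1 : algType (Cplx R)) (E1 F1 D1 Dt1 : nat -> int -> A1)
         (A2 : algType (Cplx R)) (E2 F2 D2 Dt2 : nat -> int -> A2),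
  is_shifted_yangian mu1 E1 F1 D1 Dt1 ->
  is_shifted_yangian mu2 E2 F2 D2 Dt2 ->
  exists f : A1 -> A2,
    alg_hom f /\ bijective f /\
    (forall i (r : int), Eidx n i -> 1 <= r ->
       f (E1 i r) = E2 i r /\ f (F1 i r) = F2 i r) /\
    (forall i (s : int), Didx n i -> eps_coord mu1 i <= s ->
       f (D1 i s) = D2 i (s - (eps_coord mu1 i - eps_coord mu2 i))) /\
    (forall i (s : int), Didx n i -> - eps_coord mu1 i <= s ->
       f (Dt1 i s) = Dt2 i (s + (eps_coord mu1 i - eps_coord mu2 i))).
Proof.
move=> n2 hyp A1 E1 F1 D1 Dt1 A2 E2 F2 D2 Dt2 [R1 U1] [R2 U2].
have hyp' : forall i : nat, (1 <= i <= n.-1)%N -> alpha_coroot mu2 i = alpha_coroot mu1 i.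
  by move=> i Hi; rewrite hyp.
have R2' := @shift_rels _ n mu1 mu2 hyp _ _ _ _ _ R2.
have R1' := @shift_rels _ n mu2 mu1 hyp' _ _ _ _ _ R1.
have [[f [hf [fE [fD fDt]]]] _] := U1 A2 _ _ _ _ R2'.
have [[g [hg [gE [gD gDt]]]] _] := U2 A1 _ _ _ _ R1'.
exists f; split => //; split; last by split.
exists g.
- move=> x; have [_ u] := U1 A1 E1 F1 D1 Dt1 R1.
  apply: (u (g \o f) id); [exact: alg_hom_comp|exact: alg_hom_id|..] => /=.
  + move=> i r Hi Hr; have [-> ->] := fE i r Hi Hr; exact: gE.
  + move=> i s Hi Hs; rewrite fD // gD //=; last lia.
    congr (D1 i _); ring.
  + move=> i s Hi Hs; rewrite fDt // gDt //=; last lia.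
    congr (Dt1 i _); ring.
- move=> x; have [_ u] := U2 A2 E2 F2 D2 Dt2 R2.
  apply: (u (f \o g) id); [exact: alg_hom_comp|exact: alg_hom_id|..] => /=.
  + move=> i r Hi Hr; have [-> ->] := gE i r Hi Hr; exact: fE.
  + move=> i s Hi Hs; rewrite gD // fD //=; last lia.
    congr (D2 i _); ring.
  + move=> i s Hi Hs; rewrite gDt // fDt //=; last lia.
    congr (Dt2 i _); ring.
Qed.
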